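(* Let $s,t_1,\dots,t_n\in\mathbb{R}^2$ be distinct points, with $T=\{t_1,\dots,t_n\}$ ordered so that $D_{st_1}\le\dots\le D_{st_n}$. Let $P_s>0$, $N_0>0$, $\gamma\in(0,\infty)$, $P_r=\gamma P_s$, $\alpha\ge2$. Let $r^\circ$ be the point on the segment $[s,t_n]$ with $D_{sr^\circ}=\dfrac{D_{st_n}}{1+\sqrt[\alpha]{\gamma}}$, and let $C_s$ be the closed disk centered at $s$ of radius $D_{sr^\circ}$ and $C_r$ the closed disk centered at $r^\circ$ of radius $D_{r^\circ t_n}$. If $T\subseteq C_s\cup C_r$, then $r^\circ$ maximizes the multicast rate $R^*_{sT}(r)$ over all relay positions $r\in\mathbb{R}^2\setminus(\{s\}\cup T)$ (where $r^\circ$ itself is assumed not to lie in $T$).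
   Context: $D_{uv}$ is Euclidean distance. Achievable low-SNR broadcast-relay hypergraph model: for a relay position $r\notin\{s\}\cup T$, the node set is $\mathcal{N}=\{s,r\}\cup T$. The hyperarcs are $(s,J)$ for nonempty $J\subseteq\{r\}\cup T$ and $(r,J)$ for nonempty $J\subseteq T$. A power allocation assigns $P_{sJ}\ge0$, $P_{rJ}\ge0$ with $\sum_J P_{sJ}\le P_s$ and $\sum_J P_{rJ}\le P_r$; the capacity of hyperarc $(i,J)$ is $c_{iJ}=P_{iJ}/(N_0\max_{j\in J}D_{ij}^{\alpha})$. For a receiver $t\in T$, $R_{st}$ is the minimum, over all $S\subseteq\mathcal{N}$ with $s\in S$, $t\notin S$, of $\sum c_{iJ}$ over hyperarcs with $i\in S$ and $J\not\subseteq S$. The multicast rate is $R_{sT}=\min_{t\in T}R_{st}$, and $R^*_{sT}(r)$ is its maximum over all power allocations. *)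

(* Defs.v *)
From Stdlib Require Import Reals List Bool.
Import ListNotations.
Open Scope R_scope.

Definition pt : Type := (R * R)%type.

Definition Dpt (p q : pt) : R :=
  sqrt ((fst p - fst q) ^ 2 + (snd p - snd q) ^ 2).

(* Subsets of the terminal set T = {t_0,...,t_{n-1}} are encoded as boolean
   masks of length n: terminal k belongs to the subset iff [nth k m false]. *)
Fixpoint masks (n : nat) : list (list bool) :=
  match n with
  | O => [nil]
  | S n' => map (cons true) (masks n') ++ map (cons false) (masks n')
  end.

Definition memb (m : list bool) (k : nat) : bool := nth k m false.

Definition nonemptyb (m : list bool) : bool := existsb (fun b => b) m.

(* Source hyperarcs (s,J), J a nonempty subset of {r} ∪ T, encoded as
   (b, m): b = (r ∈ J), m = mask of J ∩ T. *)
Definition src_arcs (n : nat) : list (bool * list bool) :=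
  filter (fun p => fst p || nonemptyb (snd p)) (list_prod [true; false] (masks n)).

(* Relay hyperarcs (r,J), J a nonempty subset of T. *)
Definition rel_arcs (n : nat) : list (list bool) :=
  filter nonemptyb (masks n).

Definition sumR (l : list R) : R := fold_right Rplus 0 l.
Definition maxR (l : list R) : R := fold_right Rmax 0 l.
Definition list_min (l : list R) : R :=
  match l with nil => 0 | x :: l' => fold_right Rmin x l' end.

Section Model.
Variables (n : nat) (s : pt) (t : nat -> pt) (r : pt) (N0 alpha : R).

Definition src_maxpow (a : bool * list bool) : R :=
  maxR ((if fst a then [Rpower (Dpt s r) alpha] else [])
        ++ map (fun k => Rpower (Dpt s (t k)) alpha)
               (filter (memb (snd a)) (seq 0 n))).

Definition rel_maxpow (m : list bool) : R :=
  maxR (map (fun k => Rpower (Dpt r (t k)) alpha) (filter (memb m) (seq 0 n))).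

Variables (PS : bool -> list bool -> R) (PR : list bool -> R).

Definition cap_src (a : bool * list bool) : R :=
  PS (fst a) (snd a) / (N0 * src_maxpow a).
Definition cap_rel (m : list bool) : R := PR m / (N0 * rel_maxpow m).

(* A cut S ⊆ N with s ∈ S is encoded by (br, ms): br = (r ∈ S),
   ms = mask of S ∩ T.  Hyperarc (i,J) crosses iff i ∈ S and J ⊄ S. *)
Definition outside_T (ms m : list bool) : bool :=
  existsb (fun k => memb m k && negb (memb ms k)) (seq 0 n).

Definition cut_value (c : bool * list bool) : R :=
  let br := fst c in let ms := snd c in
  sumR (map cap_src
         (filter (fun a => (fst a && negb br) || outside_T ms (snd a)) (src_arcs n)))
  + (if br then sumR (map cap_rel (filter (outside_T ms) (rel_arcs n))) else 0).

Definition cuts_for (k : nat) : list (bool * list bool) :=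
  list_prod [true; false] (filter (fun ms => negb (memb ms k)) (masks n)).

Definition R_st (k : nat) : R := list_min (map cut_value (cuts_for k)).

Definition R_sT : R := list_min (map R_st (seq 0 n)).

End Model.

Definition feasible (n : nat) (Ps Pr : R) (PS : bool -> list bool -> R)
  (PR : list bool -> R) : Prop :=
  (forall a, In a (src_arcs n) -> 0 <= PS (fst a) (snd a)) /\
  sumR (map (fun a => PS (fst a) (snd a)) (src_arcs n)) <= Ps /\
  (forall m, In m (rel_arcs n) -> 0 <= PR m) /\
  sumR (map PR (rel_arcs n)) <= Pr.

(* Main.v *)
Require Import Defs.
From Stdlib Require Import Reals List Lra Lia Bool FinFun.
From Coquelicot Require Coquelicot.
Import ListNotations.
Open Scope R_scope.

Lemma Rpower_pos x a : 0 < Rpower x a.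
Proof. unfold Rpower; apply exp_pos. Qed.

Module CQ.
Import Coquelicot.Coquelicot.



Lemma F_mono (g a v : R) : 0 < g -> 1 < a -> 0 < v < 1 ->
  Rpower (g + v) a - Rpower v a < Rpower (g + 1) a - Rpower 1 a.
Proof.
  intros Hg Ha Hv.
  apply (incr_function (fun v => Rpower (g + v) a - Rpower v a) 0 p_infty
     (fun v => a * Rpower (g + v) (a - 1) - a * Rpower v (a - 1))); simpl; try lra.
  - intros x Hx _. apply is_derive_Reals.
    apply derivable_pt_lim_minus.
    + replace (a * Rpower (g + x) (a - 1)) with ((a * Rpower (g+x) (a-1)) * 1) by ring.
      apply (derivable_pt_lim_comp (fun x => g + x) (fun y => Rpower y a)).
      * replace 1 with (0 + 1) by ring. apply derivable_pt_lim_plus.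
        apply derivable_pt_lim_const. apply derivable_pt_lim_id.
      * apply derivable_pt_lim_power; lra.
    + apply derivable_pt_lim_power; lra.
  - intros x Hx _. apply Rlt_0_minus.
    apply Rmult_lt_compat_l; [lra|]. apply Rlt_Rpower_l; lra.
Qed.


End CQ.
Definition F_mono := CQ.F_mono.
Lemma key_t (g a t : R) : 0 < g -> 1 < a -> 0 < t -> t * (1 + g) < 1 ->
  (1 - Rpower t a) * Rpower g a <= (Rpower (1 + g) a - 1) * Rpower (1 - t) a.
Proof.
  intros Hg Ha Ht Htg.
  assert (H1t : 0 < 1 - t) by nra.
  set (v := g * t / (1 - t)).
  assert (Hv : 0 < v < 1).
  { unfold v; split. apply Rdiv_lt_0_compat; nra.
    apply Rmult_lt_reg_r with (1 - t); auto. field_simplify; lra. }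
  pose proof (F_mono g a v Hg Ha Hv) as HF.
  assert (R1 : Rpower 1 a = 1) by (unfold Rpower; rewrite ln_1, Rmult_0_r; apply exp_0).
  rewrite R1 in HF.
  assert (E1 : g + v = g * / (1 - t)) by (unfold v; field; lra).
  assert (E2 : v = g * t * / (1 - t)) by (unfold v; field; lra).
  rewrite E1 in HF. rewrite E2 in HF.
  assert (Hi : 0 < / (1 - t)) by (apply Rinv_0_lt_compat; lra).
  rewrite <- (Rpower_mult_distr g) in HF by lra.
  rewrite <- (Rpower_mult_distr (g * t)) in HF by nra.
  rewrite <- (Rpower_mult_distr g t) in HF by lra.
  assert (Hinv : Rpower (/ (1 - t)) a * Rpower (1 - t) a = 1).
  { rewrite Rpower_mult_distr by lra. rewrite Rinv_l by lra. unfold Rpower. rewrite ln_1. 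
    rewrite Rmult_0_r. apply exp_0. }
  replace (g + 1) with (1 + g) in HF by ring.
  pose proof (Rpower_pos (1 - t) a).
  pose proof (Rpower_pos t a). pose proof (Rpower_pos g a).
  pose proof (Rpower_pos (/ (1 - t)) a).
  set (I := Rpower (/ (1 - t)) a) in *. set (P := Rpower (1 - t) a) in *.
  set (G := Rpower g a) in *. set (Tt := Rpower t a) in *.
  apply Rmult_lt_compat_r with (r := P) in HF; auto.
  replace ((G * I - G * Tt * I) * P) with ((1 - Tt) * G * (I * P)) in HF by ring.
  rewrite Hinv in HF. lra.
Qed.

Lemma Rpower_1_base a : Rpower 1 a = 1.
Proof. unfold Rpower; rewrite ln_1, Rmult_0_r; apply exp_0. Qed.

Lemma real_core (D x y g a A B Ps : R) :
  0 < D -> 0 < x -> 0 < y -> 0 < g -> 1 < a -> D <= x + y ->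
  0 <= A -> 0 <= B -> A + B <= Ps -> 0 < Ps ->
  A / Rpower D a + Rpower g a * Ps / Rpower y a <= Ps / Rpower (D / (1 + g)) a \/
  A / Rpower D a + B / Rpower x a <= Ps / Rpower (D / (1 + g)) a.
Proof.
  intros HD Hx Hy Hg Ha Hxy HA HB HAB HPs.
  assert (Hdg : 0 < D / (1 + g)) by (apply Rdiv_lt_0_compat; lra).
  assert (HdD : D / (1 + g) <= D).
  { apply Rmult_le_reg_r with (1 + g); [lra|]. field_simplify; nra. }
  pose proof (Rpower_pos (D / (1+g)) a) as Hdd.
  destruct (Rle_lt_dec (D / (1 + g)) x) as [Hc|Hc].
  - right.
    assert (H1 : Rpower (D / (1 + g)) a <= Rpower x a) by (apply Rle_Rpower_l; lra).
    assert (H2 : Rpower (D / (1 + g)) a <= Rpower D a) by (apply Rle_Rpower_l; lra).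
    set (dd := Rpower (D / (1 + g)) a) in *.
    assert (A / Rpower D a <= A / dd).
    { unfold Rdiv. apply Rmult_le_compat_l; auto. apply Rinv_le_contravar; auto. }
    assert (B / Rpower x a <= B / dd).
    { unfold Rdiv. apply Rmult_le_compat_l; auto. apply Rinv_le_contravar; auto. }
    assert ((A + B) / dd <= Ps / dd).
    { unfold Rdiv. apply Rmult_le_compat_r; auto. left; apply Rinv_0_lt_compat; auto. }
    unfold Rdiv in *; lra.
  - set (t := x / D).
    assert (Ht : 0 < t) by (unfold t; apply Rdiv_lt_0_compat; lra).
    assert (Htg : t * (1 + g) < 1).
    { unfold t. apply Rmult_lt_reg_r with (D / (1+g)); auto.
      replace (x / D * (1 + g) * (D / (1 + g))) with x by (field; lra). lra. }
    assert (Ht1 : t < 1) by nra.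
    assert (Hxe : x = D * t) by (unfold t; field; lra).
    pose proof (key_t g a t Hg Ha Ht Htg) as K.
    set (aa := Rpower D a).
    assert (Haa : 0 < aa) by apply Rpower_pos.
    set (Tt := Rpower t a) in *.
    assert (HTt : 0 < Tt) by apply Rpower_pos.
    assert (HTt1 : Tt < 1) by (unfold Tt; rewrite <- (Rpower_1_base a); apply Rlt_Rpower_l; lra).
    set (P := Rpower (1 - t) a) in *.
    assert (HP : 0 < P) by apply Rpower_pos.
    set (T := Rpower (1 + g) a) in *.
    set (G := Rpower g a) in *.
    assert (HG : 0 < G) by apply Rpower_pos.
    assert (Ebb : Rpower x a = aa * Tt).
    { rewrite Hxe. unfold aa, Tt. rewrite Rpower_mult_distr; auto. }
    assert (Ecc : aa * P <= Rpower y a).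
    { unfold aa, P. rewrite Rpower_mult_distr by lra. apply Rle_Rpower_l; nra. }
    assert (Edd : Rpower (D / (1 + g)) a * T = aa).
    { unfold T, aa. rewrite Rpower_mult_distr by lra. f_equal. field. lra. }
    set (cc := Rpower y a) in *. set (dd := Rpower (D / (1 + g)) a) in *.
    rewrite Ebb.
    assert (Hcc : 0 < cc) by (unfold cc; apply Rpower_pos).
    assert (Hb : (1 - Tt) * (G * Ps / cc) <= (T - 1) * Ps / aa).
    { apply Rle_trans with ((1 - Tt) * G * Ps / (aa * P)).
      - replace ((1 - Tt) * (G * Ps / cc)) with ((1 - Tt) * G * Ps * / cc) by (field; lra).
        unfold Rdiv. apply Rmult_le_compat_l.
        + apply Rmult_le_pos; [apply Rmult_le_pos|]; lra.
        + apply Rinv_le_contravar; nra.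
      - apply Rmult_le_reg_r with (aa * P); [nra|].
        unfold Rdiv. field_simplify; try lra. 
        pose proof (Rmult_le_compat_r Ps _ _ (Rlt_le _ _ HPs) K). lra. }
    assert (Hsum : (1 - Tt) * (A / aa + G * Ps / cc) + Tt * (A / aa + B / (aa * Tt))
                   <= Ps / dd).
    { replace (Ps / dd) with (T * Ps / aa).
      2:{ rewrite <- Edd. assert (0 < T) by apply Rpower_pos. field. split; lra. }
      replace ((1 - Tt) * (A / aa + G * Ps / cc) + Tt * (A / aa + B / (aa * Tt)))
        with ((A + B) / aa + (1 - Tt) * (G * Ps / cc)) by (field; lra).
      assert ((A + B) / aa <= Ps / aa).
      { unfold Rdiv. apply Rmult_le_compat_r; auto. left; apply Rinv_0_lt_compat; auto. }
      unfold Rdiv in *; lra. }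
    destruct (Rle_lt_dec (A / aa + G * Ps / cc) (Ps / dd)) as [Hl|Hl]; [left; exact Hl|right].
    nra.
Qed.


Lemma Dpt_sym p q : Dpt p q = Dpt q p.
Proof. unfold Dpt. f_equal. ring. Qed.

Lemma Dpt_pos p q : p <> q -> 0 < Dpt p q.
Proof.
  intros H. unfold Dpt. apply sqrt_lt_R0.
  destruct p as [p1 p2], q as [q1 q2]; simpl.
  destruct (Req_dec p1 q1); destruct (Req_dec p2 q2).
  - subst; exfalso; apply H; reflexivity.
  - assert (p2 - q2 <> 0) by lra. nra.
  - assert (p1 - q1 <> 0) by lra. nra.
  - assert (p1 - q1 <> 0) by lra. nra.
Qed.

Lemma Dpt_tri p q w : Dpt p w <= Dpt p q + Dpt q w.
Proof.
  unfold Dpt. set (u1 := fst p - fst q). set (w1 := snd p - snd q).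
  set (u2 := fst q - fst w). set (w2 := snd q - snd w).
  replace (fst p - fst w) with (u1 + u2) by (unfold u1, u2; ring).
  replace (snd p - snd w) with (w1 + w2) by (unfold w1, w2; ring).
  pose proof (sqrt_cauchy u1 w1 u2 w2) as C. unfold Rsqr in C.
  assert (H1 : 0 <= u1 ^ 2 + w1 ^ 2) by nra.
  assert (H2 : 0 <= u2 ^ 2 + w2 ^ 2) by nra.
  replace (u1 * u1 + w1 * w1) with (u1 ^ 2 + w1 ^ 2) in C by ring.
  replace (u2 * u2 + w2 * w2) with (u2 ^ 2 + w2 ^ 2) in C by ring.
  pose proof (sqrt_sqrt _ H1). pose proof (sqrt_sqrt _ H2).
  pose proof (sqrt_pos (u1 ^ 2 + w1 ^ 2)). pose proof (sqrt_pos (u2 ^ 2 + w2 ^ 2)).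
  set (S1 := sqrt (u1 ^ 2 + w1 ^ 2)) in *. set (S2 := sqrt (u2 ^ 2 + w2 ^ 2)) in *.
  rewrite <- (sqrt_square (S1 + S2)) by lra.
  apply sqrt_le_1_alt. nra.
Qed.

Lemma Dpt_seg s q lam : 0 <= lam <= 1 ->
  let r0 := (fst s + lam * (fst q - fst s), snd s + lam * (snd q - snd s)) in
  Dpt s r0 = lam * Dpt s q /\ Dpt r0 q = (1 - lam) * Dpt s q.
Proof.
  intros Hl r0. unfold r0, Dpt; cbn [fst snd].
  set (Q := (fst s - fst q) ^ 2 + (snd s - snd q) ^ 2).
  assert (HQ : 0 <= Q) by (unfold Q; apply Rplus_le_le_0_compat; apply pow2_ge_0).
  split.
  - replace ((fst s - (fst s + lam * (fst q - fst s))) ^ 2 +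
      (snd s - (snd s + lam * (snd q - snd s))) ^ 2) with ((lam * lam) * Q) by (unfold Q; ring).
    rewrite sqrt_mult by nra. rewrite sqrt_square by lra. reflexivity.
  - replace ((fst s + lam * (fst q - fst s) - fst q) ^ 2 +
      (snd s + lam * (snd q - snd s) - snd q) ^ 2) with (((1-lam) * (1-lam)) * Q) by (unfold Q; ring).
    rewrite sqrt_mult by nra. rewrite sqrt_square by lra. reflexivity.
Qed.


Lemma sumR_filter {A} (f : A -> R) (p : A -> bool) l :
  sumR (map f (filter p l)) = sumR (map (fun x => if p x then f x else 0) l).
Proof. induction l as [|a l IH]; simpl; auto. destruct (p a); simpl; rewrite IH; ring. Qed.

Lemma sumR_le {A} (f g : A -> R) l :
  (forall x, In x l -> f x <= g x) -> sumR (map f l) <= sumR (map g l).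
Proof.
  induction l as [|a l IH]; simpl; intros H; [lra|].
  pose proof (H a (or_introl eq_refl)). pose proof (IH (fun x Hx => H x (or_intror Hx))). lra.
Qed.

Lemma sumR_plus {A} (f g : A -> R) l :
  sumR (map (fun x => f x + g x) l) = sumR (map f l) + sumR (map g l).
Proof. induction l as [|a l IH]; simpl; [ring|]. rewrite IH; ring. Qed.

Lemma sumR_div {A} (f : A -> R) c l :
  sumR (map (fun x => f x / c) l) = sumR (map f l) / c.
Proof. induction l as [|a l IH]; simpl; unfold Rdiv in *; [ring|]. rewrite IH; ring. Qed.

Lemma sumR_nonneg {A} (f : A -> R) l :
  (forall x, In x l -> 0 <= f x) -> 0 <= sumR (map f l).
Proof.
  induction l as [|a l IH]; simpl; intros H; [lra|].
  pose proof (H a (or_introl eq_refl)). pose proof (IH (fun x Hx => H x (or_intror Hx))). lra.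
Qed.

Lemma sumR_ge_elem {A} (f : A -> R) l x0 :
  (forall x, In x l -> 0 <= f x) -> In x0 l -> f x0 <= sumR (map f l).
Proof.
  induction l as [|a l IH]; simpl; intros H Hin; [contradiction|].
  destruct Hin as [<-|Hin].
  - pose proof (sumR_nonneg f l (fun x Hx => H x (or_intror Hx))). lra.
  - pose proof (H a (or_introl eq_refl)). pose proof (IH (fun x Hx => H x (or_intror Hx)) Hin). lra.
Qed.

Lemma fold_min_le x l : fold_right Rmin x l <= x /\ forall y, In y l -> fold_right Rmin x l <= y.
Proof.
  induction l as [|a l IH]; simpl; split; try lra; try tauto.
  - destruct IH. pose proof (Rmin_r a (fold_right Rmin x l)). lra.
  - intros y [<-|Hy]. apply Rmin_l. destruct IH as [_ IH].
    pose proof (Rmin_r a (fold_right Rmin x l)). pose proof (IH y Hy). lra.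
Qed.

Lemma list_min_le l x : In x l -> list_min l <= x.
Proof.
  destruct l as [|a l]; simpl; [tauto|]. intros [<-|H]. apply (proj1 (fold_min_le _ l)).
  apply (proj2 (fold_min_le a l)); auto.
Qed.

Lemma list_min_ge l c : l <> nil -> (forall x, In x l -> c <= x) -> c <= list_min l.
Proof.
  destruct l as [|a l]; [tauto|]. intros _ H. simpl.
  assert (Ha : c <= a) by (apply H; simpl; auto).
  assert (Hl : forall x, In x l -> c <= x) by (intros; apply H; simpl; auto).
  clear H. induction l as [|b l IH]; simpl; auto.
  apply Rmin_glb. apply Hl; simpl; auto. apply IH. intros; apply Hl; simpl; auto.
Qed.

Lemma maxR_ge l x : In x l -> x <= maxR l.
Proof.
  induction l as [|a l IH]; simpl; [tauto|]. intros [<-|H]. apply Rmax_l.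
  pose proof (IH H). pose proof (Rmax_r a (maxR l)). lra.
Qed.

Lemma maxR_nonneg l : 0 <= maxR l.
Proof. induction l; simpl; [lra|]. pose proof (Rmax_r a (maxR l)). lra. Qed.

Lemma maxR_le l c : 0 <= c -> (forall x, In x l -> x <= c) -> maxR l <= c.
Proof.
  induction l as [|a l IH]; simpl; intros Hc H; [lra|].
  apply Rmax_lub. apply H; auto. apply IH; auto.
Qed.

Lemma masks_complete m n : length m = n -> In m (masks n).
Proof.
  revert n; induction m as [|b m IH]; intros n Hn; simpl in Hn; subst; simpl; auto.
  apply in_or_app. destruct b; [left|right]; apply in_map; auto.
Qed.

Lemma masks_NoDup n : NoDup (masks n).
Proof.
  induction n; simpl. constructor; auto. constructor.
  apply NoDup_app.
  - apply FinFun.Injective_map_NoDup; auto. intros x y H; injection H; auto.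
  - apply FinFun.Injective_map_NoDup; auto. intros x y H; injection H; auto.
  - intros a H1 H2. apply in_map_iff in H1, H2. destruct H1 as [x [<- _]].
    destruct H2 as [y [E _]]. discriminate.
Qed.

Lemma src_arcs_NoDup n : NoDup (src_arcs n).
Proof.
  unfold src_arcs. apply NoDup_filter. simpl. rewrite app_nil_r.
  pose proof (masks_NoDup n).
  apply NoDup_app.
  - apply FinFun.Injective_map_NoDup; auto. intros x y H'; injection H'; auto.
  - apply FinFun.Injective_map_NoDup; auto. intros x y H'; injection H'; auto.
  - intros a H1 H2. apply in_map_iff in H1, H2. destruct H1 as [x [<- _]].
    destruct H2 as [y [E _]]. discriminate.
Qed.

Lemma sum_single {A} (dec : forall x y : A, {x = y} + {x <> y}) (l : list A) a0 c :
  NoDup l -> 0 <= c -> sumR (map (fun x => if dec x a0 then c else 0) l) <= c.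
Proof.
  intros ND Hc. induction ND as [|a l Hna ND IH]; simpl; [lra|].
  destruct (dec a a0) as [->|]; [|lra].
  assert (sumR (map (fun x => if dec x a0 then c else 0) l) = 0).
  { clear IH ND. induction l as [|b l IHl]; simpl; auto.
    destruct (dec b a0). subst; exfalso; apply Hna; simpl; auto.
    rewrite IHl. ring. intro; apply Hna; simpl; auto. }
  lra.
Qed.

Lemma div_nonneg x y : 0 <= x -> 0 <= y -> 0 <= x / y.
Proof.
  intros Hx [Hy|Hy]. unfold Rdiv. apply Rmult_le_pos; auto. left; apply Rinv_0_lt_compat; auto.
  subst. unfold Rdiv. rewrite Rinv_0. lra.
Qed.

Lemma div_mono x y1 y2 : 0 <= x -> 0 < y1 -> y1 <= y2 -> x / y2 <= x / y1.
Proof.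
  intros. unfold Rdiv. apply Rmult_le_compat_l; auto. apply Rinv_le_contravar; auto.
Qed.

Lemma div_mono_ge x y1 y2 : 0 <= x -> 0 < y1 -> y1 <= y2 -> x / y2 <= x / y1.
Proof. apply div_mono. Qed.

Lemma memb_map_seq (f : nat -> bool) n k : (k < n)%nat -> memb (map f (seq 0 n)) k = f k.
Proof.
  intros H. unfold memb. rewrite nth_indep with (d' := f 0%nat) by (rewrite length_map, length_seq; auto).
  rewrite map_nth, seq_nth; auto.
Qed.

Lemma length_map_seq (f : nat -> bool) n : length (map f (seq 0 n)) = n.
Proof. rewrite length_map, length_seq; auto. Qed.


Lemma ms1_props n : (1 <= n)%nat ->
  let ms1 := repeat true (n - 1) ++ [false] in
  length ms1 = n /\ memb ms1 (n - 1) = false /\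
  (forall m, outside_T n ms1 m = true -> memb m (n - 1) = true).
Proof.
  intros Hn ms1.
  assert (Hlt : forall j, (j < n - 1)%nat -> memb ms1 j = true).
  { intros j Hj. unfold memb, ms1. rewrite app_nth1 by (rewrite repeat_length; lia).
    apply nth_repeat_lt; lia. }
  assert (Hk : memb ms1 (n - 1) = false).
  { unfold memb, ms1. rewrite app_nth2 by (rewrite repeat_length; lia).
    rewrite repeat_length, Nat.sub_diag. reflexivity. }
  split; [unfold ms1; rewrite length_app, repeat_length; simpl; lia|].
  split; auto.
  intros m Ho. unfold outside_T in Ho. apply existsb_exists in Ho.
  destruct Ho as [j [Hj Hb]]. apply in_seq in Hj. apply andb_prop in Hb. destruct Hb as [Hm Hn1].
  destruct (Nat.lt_ge_cases j (n - 1)) as [Hl|Hl].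
  - rewrite Hlt in Hn1 by auto. discriminate.
  - assert (j = n - 1)%nat by lia. subst; auto.
Qed.

Lemma cap_bound (x N0 m M : R) : 0 <= x -> 0 < N0 -> 0 < m -> m <= M ->
  x / (N0 * M) <= x / (N0 * m).
Proof. intros. apply div_mono; auto; nra. Qed.

Lemma upper (n : nat) (s : pt) (t : nat -> pt) (r : pt) (Ps N0 g alpha : R)
  (PS : bool -> list bool -> R) (PR : list bool -> R) :
  (1 <= n)%nat -> t (n - 1)%nat <> s -> r <> s -> r <> t (n - 1)%nat ->
  0 < Ps -> 0 < N0 -> 0 < g -> 1 < alpha ->
  feasible n Ps (Rpower g alpha * Ps) PS PR ->
  R_sT n s t r N0 alpha PS PR <= Ps / (N0 * Rpower (Dpt s (t (n - 1)%nat) / (1 + g)) alpha).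
Proof.
  intros Hn Hts Hrs Hrt HPs HN0 Hg Ha [HPS0 [HPSs [HPR0 HPRs]]].
  pose proof (ms1_props n Hn) as [Hlen [Hk Hout]].
  set (ms1 := repeat true (n - 1) ++ [false]) in *.
  set (k := (n - 1)%nat) in *.
  set (tn := t k) in *.
  set (L := src_arcs n).
  set (D := Dpt s tn).
  assert (HD : 0 < D) by (apply Dpt_pos; auto).
  assert (Hx : 0 < Dpt s r) by (apply Dpt_pos; auto).
  assert (Hy : 0 < Dpt r tn) by (apply Dpt_pos; auto).
  set (aa := Rpower D alpha). set (bb := Rpower (Dpt s r) alpha). set (cc := Rpower (Dpt r tn) alpha).
  assert (Haa : 0 < aa) by apply Rpower_pos.
  assert (Hbb : 0 < bb) by apply Rpower_pos.
  assert (Hcc : 0 < cc) by apply Rpower_pos.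
  assert (Hkin : In k (seq 0 n)) by (apply in_seq; unfold k; lia).
  assert (Hmax1 : forall a : bool * list bool, memb (snd a) k = true -> aa <= src_maxpow n s t r alpha a).
  { intros a Ha1. unfold src_maxpow. apply maxR_ge. apply in_or_app; right.
    apply in_map_iff. exists k; split; auto. apply filter_In; auto. }
  assert (Hmax2 : forall a : bool * list bool, fst a = true -> bb <= src_maxpow n s t r alpha a).
  { intros a Ha1. unfold src_maxpow. apply maxR_ge. apply in_or_app; left.
    rewrite Ha1. simpl; auto. }
  assert (Hmaxr : forall m, memb m k = true -> cc <= rel_maxpow n t r alpha m).
  { intros m Hm. unfold rel_maxpow. apply maxR_ge.
    apply in_map_iff. exists k; split; auto. apply filter_In; auto. }
  set (A := sumR (map (fun a : bool * list bool => if memb (snd a) k then PS (fst a) (snd a) else 0) L)).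
  set (B := sumR (map (fun a : bool * list bool => if memb (snd a) k then 0 else if fst a then PS (fst a) (snd a) else 0) L)).
  assert (HA : 0 <= A).
  { apply sumR_nonneg. intros a Ha1. pose proof (HPS0 a Ha1). destruct (memb (snd a) k); lra. }
  assert (HB : 0 <= B).
  { apply sumR_nonneg. intros a Ha1. pose proof (HPS0 a Ha1). destruct (memb (snd a) k); [lra|].
    destruct (fst a); lra. }
  assert (HAB : A + B <= Ps).
  { unfold A, B. rewrite <- sumR_plus. eapply Rle_trans; [|exact HPSs].
    apply sumR_le. intros a Ha1. pose proof (HPS0 a Ha1).
    destruct (memb (snd a) k); [lra|]. destruct (fst a); lra. }
  assert (Hst : R_sT n s t r N0 alpha PS PR <= R_st n s t r N0 alpha PS PR k).
  { apply list_min_le. apply in_map; auto. }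
  assert (Hms1 : In ms1 (filter (fun ms => negb (memb ms k)) (masks n))).
  { apply filter_In; split. apply masks_complete; auto. rewrite Hk; auto. }
  assert (Hc1 : R_st n s t r N0 alpha PS PR k <= cut_value n s t r N0 alpha PS PR (true, ms1)).
  { apply list_min_le. apply in_map. apply in_prod; simpl; auto. }
  assert (Hc2 : R_st n s t r N0 alpha PS PR k <= cut_value n s t r N0 alpha PS PR (false, ms1)).
  { apply list_min_le. apply in_map. apply in_prod; simpl; auto. }
  assert (Hcut1 : cut_value n s t r N0 alpha PS PR (true, ms1) <= A / (N0 * aa) + (Rpower g alpha * Ps) / (N0 * cc)).
  { unfold cut_value. cbn [fst snd]. apply Rplus_le_compat.
    - rewrite sumR_filter. apply Rle_trans with
        (sumR (map (fun a => (if memb (snd a) k then PS (fst a) (snd a) else 0) / (N0 * aa)) L)).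
      + apply sumR_le. intros a Ha1. pose proof (HPS0 a Ha1).
        change (negb true) with false. rewrite andb_false_r, orb_false_l.
        destruct (outside_T n ms1 (snd a)) eqn:E.
        * rewrite (Hout _ E). unfold cap_src.
          apply cap_bound; [lra|lra|lra|apply Hmax1; apply Hout; exact E].
        * destruct (memb (snd a) k).
          apply div_nonneg; nra. unfold Rdiv; lra.
      + rewrite sumR_div. apply Req_le; reflexivity.
    - rewrite sumR_filter. apply Rle_trans with
        (sumR (map (fun m => PR m / (N0 * cc)) (rel_arcs n))).
      + apply sumR_le. intros m Hm. pose proof (HPR0 m Hm).
        destruct (outside_T n ms1 m) eqn:E.
        * unfold cap_rel. apply cap_bound; [lra|lra|lra|apply Hmaxr; apply Hout; exact E].
        * apply div_nonneg; nra.
      + rewrite sumR_div. unfold Rdiv. apply Rmult_le_compat_r; auto.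
        left; apply Rinv_0_lt_compat; nra. }
  assert (Hcut2 : cut_value n s t r N0 alpha PS PR (false, ms1) <= A / (N0 * aa) + B / (N0 * bb)).
  { unfold cut_value. cbn [fst snd]. rewrite Rplus_0_r.
    rewrite sumR_filter. apply Rle_trans with
        (sumR (map (fun a => (if memb (snd a) k then PS (fst a) (snd a) else 0) / (N0 * aa)
                + (if memb (snd a) k then 0 else if fst a then PS (fst a) (snd a) else 0) / (N0 * bb)) L)).
    + apply sumR_le. intros a Ha1. pose proof (HPS0 a Ha1).
      assert (0 <= (if memb (snd a) k then PS (fst a) (snd a) else 0) / (N0 * aa)).
      { apply div_nonneg; [destruct (memb (snd a) k); lra|nra]. }
      assert (0 <= (if memb (snd a) k then 0 else if fst a then PS (fst a) (snd a) else 0) / (N0 * bb)).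
      { apply div_nonneg; [destruct (memb (snd a) k); [lra|destruct (fst a); lra]|nra]. }
      destruct (outside_T n ms1 (snd a)) eqn:E.
      * rewrite orb_true_r. rewrite (Hout _ E) in *. unfold cap_src.
        eapply Rle_trans; [apply (cap_bound _ _ aa); [lra|lra|lra|apply Hmax1; apply Hout; exact E]|]. lra.
      * rewrite orb_false_r. destruct (fst a) eqn:Ef; simpl.
        -- destruct (memb (snd a) k) eqn:Em; simpl.
           ++ unfold cap_src; rewrite Ef. eapply Rle_trans; [apply (cap_bound _ _ aa); [lra|lra|lra|apply Hmax1; auto]|]. unfold Rdiv in *; lra.
           ++ unfold cap_src; rewrite Ef. eapply Rle_trans; [apply (cap_bound _ _ bb); [lra|lra|lra|apply Hmax2; auto]|]. unfold Rdiv in *; lra.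
        -- lra.
    + rewrite sumR_plus, !sumR_div. apply Req_le; reflexivity. }
  pose proof (Dpt_tri s r tn) as Htri.
  destruct (real_core D (Dpt s r) (Dpt r tn) g alpha A B Ps HD Hx Hy Hg Ha Htri HA HB HAB HPs)
    as [H1|H1]; fold aa bb cc in H1.
  - eapply Rle_trans; [exact Hst|]. eapply Rle_trans; [exact Hc1|]. eapply Rle_trans; [exact Hcut1|].
    pose proof (Rpower_pos (D / (1 + g)) alpha).
    replace (A / (N0 * aa) + Rpower g alpha * Ps / (N0 * cc)) with
      ((A / aa + Rpower g alpha * Ps / cc) / N0) by (field; repeat split; lra).
    replace (Ps / (N0 * Rpower (D / (1 + g)) alpha)) with
      ((Ps / Rpower (D / (1 + g)) alpha) / N0) by (field; repeat split; lra).
    unfold Rdiv at 1 3. apply Rmult_le_compat_r; auto. left; apply Rinv_0_lt_compat; auto.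
  - eapply Rle_trans; [exact Hst|]. eapply Rle_trans; [exact Hc2|]. eapply Rle_trans; [exact Hcut2|].
    pose proof (Rpower_pos (D / (1 + g)) alpha).
    replace (A / (N0 * aa) + B / (N0 * bb)) with
      ((A / aa + B / bb) / N0) by (field; repeat split; lra).
    replace (Ps / (N0 * Rpower (D / (1 + g)) alpha)) with
      ((Ps / Rpower (D / (1 + g)) alpha) / N0) by (field; repeat split; lra).
    unfold Rdiv at 1 3. apply Rmult_le_compat_r; auto. left; apply Rinv_0_lt_compat; auto.
Qed.


Definition abdec : forall x y : bool * list bool, {x = y} + {x <> y}.
Proof. decide equality; [apply (list_eq_dec bool_dec)|apply bool_dec]. Defined.

Lemma src_in n b m : length m = n -> b || nonemptyb m = true -> In (b, m) (src_arcs n).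
Proof.
  intros Hl Hb. unfold src_arcs. apply filter_In. split; auto.
  apply in_prod. destruct b; simpl; auto. apply masks_complete; auto.
Qed.

Lemma memb_In m k : memb m k = true -> In true m.
Proof.
  unfold memb. intros H. destruct (Nat.lt_ge_cases k (length m)).
  rewrite <- H. apply nth_In; auto. rewrite nth_overflow in H; auto; discriminate.
Qed.

Lemma outside_wit n ms m k : (k < n)%nat -> memb m k = true -> memb ms k = false ->
  outside_T n ms m = true.
Proof.
  intros Hk H1 H2. unfold outside_T. apply existsb_exists. exists k. split.
  apply in_seq; lia. rewrite H1, H2; auto.
Qed.

Lemma lower (n : nat) (s : pt) (t : nat -> pt) (r0 : pt) (Ps N0 gamma alpha : R) :
  (1 <= n)%nat -> (forall k, (k < n)%nat -> t k <> s) -> (forall k, (k < n)%nat -> t k <> r0) ->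
  0 < Dpt s r0 -> 0 < Ps -> 0 < N0 -> 0 < gamma -> 1 < alpha ->
  Rpower (Dpt r0 (t (n - 1)%nat)) alpha = gamma * Rpower (Dpt s r0) alpha ->
  (forall k, (k < n)%nat ->
     Dpt s (t k) <= Dpt s r0 \/ Dpt r0 (t k) <= Dpt r0 (t (n-1)%nat)) ->
  exists (PS0 : bool -> list bool -> R) (PR0 : list bool -> R),
    feasible n Ps (gamma * Ps) PS0 PR0 /\
    Ps / (N0 * Rpower (Dpt s r0) alpha) <= R_sT n s t r0 N0 alpha PS0 PR0.
Proof.
  intros Hn Hts Htr Hsr HPs HN0 Hgam Ha Hrel Hcov.
  set (f := fun k => if Rle_dec (Dpt s (t k)) (Dpt s r0) then true else false).
  set (min_ := map f (seq 0 n)).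
  set (mout := map (fun k => negb (f k)) (seq 0 n)).
  assert (Hmin : forall k, (k < n)%nat -> memb min_ k = f k) by (intros; apply memb_map_seq; auto).
  assert (Hmout : forall k, (k < n)%nat -> memb mout k = negb (f k)) by (intros; apply memb_map_seq; auto).
  assert (Hlmin : length min_ = n) by apply length_map_seq.
  assert (Hlmout : length mout = n) by apply length_map_seq.
  set (dd := Rpower (Dpt s r0) alpha).
  assert (Hdd : 0 < dd) by apply Rpower_pos.
  exists (fun (b : bool) (m : list bool) => if list_eq_dec bool_dec m min_ then (if b then Ps else 0) else 0).
  exists (fun m : list bool => if list_eq_dec bool_dec m mout then gamma * Ps else 0).
  set (PS0 := fun (b : bool) (m : list bool) => if list_eq_dec bool_dec m min_ then (if b then Ps else 0) else 0).
  set (PR0 := fun m : list bool => if list_eq_dec bool_dec m mout then gamma * Ps else 0).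
  assert (HPS0 : forall b m, 0 <= PS0 b m).
  { intros b m; unfold PS0. destruct (list_eq_dec bool_dec m min_); destruct b; lra. }
  assert (HPR0 : forall m, 0 <= PR0 m).
  { intros m; unfold PR0. destruct (list_eq_dec bool_dec m mout); nra. }
  split.
  { split; [intros; apply HPS0|]. split; [|split; [intros; apply HPR0|]].
    - eapply Rle_trans; [|apply (sum_single abdec (src_arcs n) (true, min_) Ps); [apply src_arcs_NoDup|lra]].
      apply sumR_le. intros [b m] _. cbn [fst snd]. unfold PS0.
      destruct (list_eq_dec bool_dec m min_) as [Em|Hne]; destruct (abdec (b, m) (true, min_)) as [E|E];
        destruct b; try lra; try congruence.
    - apply sum_single. apply NoDup_filter, masks_NoDup. nra. }
  set (a0 := (true, min_)).
  assert (Hcap0 : Ps / (N0 * dd) <= cap_src n s t r0 N0 alpha PS0 a0).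
  { unfold cap_src. simpl. unfold PS0. destruct (list_eq_dec bool_dec min_ min_) as [_|C]; [|congruence].
    assert (E : src_maxpow n s t r0 alpha a0 = dd).
    { apply Rle_antisym.
      - apply maxR_le; [lra|]. intros x Hx. apply in_app_or in Hx. destruct Hx as [Hx|Hx].
        + simpl in Hx. destruct Hx as [<-|[]]. apply Rle_refl.
        + apply in_map_iff in Hx. destruct Hx as [j [<- Hj]]. apply filter_In in Hj.
          destruct Hj as [Hj Hm]. apply in_seq in Hj. simpl in Hm. rewrite Hmin in Hm by lia.
          unfold f in Hm. destruct (Rle_dec (Dpt s (t j)) (Dpt s r0)) as [Hle|]; [|discriminate].
          apply Rle_Rpower_l; [lra|]. split; auto. apply Dpt_pos. intro E; symmetry in E; apply (Hts j); auto; lia.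
      - apply maxR_ge. simpl; auto. }
    rewrite E. lra. }
  assert (Hcap1 : forall k, (k < n)%nat -> memb mout k = true ->
            Ps / (N0 * dd) <= cap_rel n t r0 N0 alpha PR0 mout).
  { intros k Hk Hk1. unfold cap_rel, PR0. destruct (list_eq_dec bool_dec mout mout) as [_|C]; [|congruence].
    set (M1 := rel_maxpow n t r0 alpha mout).
    assert (HM1 : 0 < M1).
    { eapply Rlt_le_trans; [apply (Rpower_pos (Dpt r0 (t k)) alpha)|].
      apply maxR_ge. apply in_map_iff. exists k; split; auto. apply filter_In; split; auto. apply in_seq; lia. }
    assert (HM1' : M1 <= gamma * dd).
    { unfold dd; rewrite <- Hrel. apply maxR_le. left; apply Rpower_pos.
      intros x Hx. apply in_map_iff in Hx. destruct Hx as [j [<- Hj]]. apply filter_In in Hj.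
      destruct Hj as [Hj Hm]. apply in_seq in Hj. rewrite Hmout in Hm by lia.
      unfold f in Hm. destruct (Rle_dec (Dpt s (t j)) (Dpt s r0)) as [|Hnle]; [discriminate|].
      destruct (Hcov j) as [C|C]; [lia|contradiction|].
      apply Rle_Rpower_l; [lra|]. split; auto. apply Dpt_pos. intro E; symmetry in E; apply (Htr j); auto; lia. }
    replace (Ps / (N0 * dd)) with (gamma * Ps / (N0 * (gamma * dd))) by (field; repeat split; lra).
    apply div_mono; nra. }
  assert (Hsrc_nn : forall a, 0 <= cap_src n s t r0 N0 alpha PS0 a).
  { intros a. unfold cap_src. apply div_nonneg; auto. apply Rmult_le_pos; [lra|apply maxR_nonneg]. }
  assert (Hrel_nn : forall m, 0 <= cap_rel n t r0 N0 alpha PR0 m).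
  { intros m. unfold cap_rel. apply div_nonneg; auto. apply Rmult_le_pos; [lra|apply maxR_nonneg]. }
  assert (Ha0 : In a0 (src_arcs n)) by (apply src_in; auto).
  apply list_min_ge.
  { destruct n; [lia|]. simpl. discriminate. }
  intros x Hx. apply in_map_iff in Hx. destruct Hx as [k [<- Hk]]. apply in_seq in Hk.
  assert (Hk' : (k < n)%nat) by lia.
  unfold R_st. apply list_min_ge.
  { unfold cuts_for. simpl. intro E. apply map_eq_nil in E. apply app_eq_nil in E. destruct E as [E _].
    apply map_eq_nil in E.
    assert (In (repeat false n) (filter (fun ms => negb (memb ms k)) (masks n))).
    { apply filter_In. split. apply masks_complete, repeat_length. unfold memb. rewrite nth_repeat. auto. }
    rewrite E in H; contradiction. }
  intros x Hx. apply in_map_iff in Hx. destruct Hx as [[br ms] [<- Hc]].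
  unfold cuts_for in Hc. apply in_prod_iff in Hc. destruct Hc as [_ Hc]. apply filter_In in Hc.
  destruct Hc as [_ Hms]. apply negb_true_iff in Hms.
  unfold cut_value. cbn [fst snd].
  assert (HS : forall P, 0 <= sumR (map (cap_src n s t r0 N0 alpha PS0) (filter P (src_arcs n)))).
  { intros P. apply sumR_nonneg. intros; auto. }
  assert (HR : forall P, 0 <= sumR (map (cap_rel n t r0 N0 alpha PR0) (filter P (rel_arcs n)))).
  { intros P. apply sumR_nonneg. intros; auto. }
  assert (Hsrc : forall P : bool * list bool -> bool, P a0 = true ->
     Ps / (N0 * dd) <= sumR (map (cap_src n s t r0 N0 alpha PS0) (filter P (src_arcs n)))).
  { intros P HP. eapply Rle_trans; [exact Hcap0|]. apply sumR_ge_elem; auto.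
    apply filter_In; auto. }
  destruct br.
  - destruct (f k) eqn:Efk.
    + pose proof (Hsrc (fun a => fst a && negb true || outside_T n ms (snd a))) as H1.
      assert (0 <= sumR (map (cap_rel n t r0 N0 alpha PR0) (filter (outside_T n ms) (rel_arcs n)))) by apply HR.
      enough (Ps / (N0 * dd) <= sumR (map (cap_src n s t r0 N0 alpha PS0)
          (filter (fun a => fst a && negb true || outside_T n ms (snd a)) (src_arcs n)))) by lra.
      apply H1. simpl. apply (outside_wit n ms min_ k); auto. rewrite Hmin; auto.
    + assert (Hmk : memb mout k = true) by (rewrite Hmout, Efk; auto).
      assert (Hin : In mout (rel_arcs n)).
      { unfold rel_arcs. apply filter_In. split. apply masks_complete; auto.
        unfold nonemptyb. apply existsb_exists. exists true. split; auto. eapply memb_In; eauto. }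
      assert (Ps / (N0 * dd) <= sumR (map (cap_rel n t r0 N0 alpha PR0) (filter (outside_T n ms) (rel_arcs n)))).
      { eapply Rle_trans; [apply (Hcap1 k); auto|]. apply sumR_ge_elem; auto.
        apply filter_In; split; auto. apply (outside_wit n ms mout k); auto. }
      pose proof (HS (fun a => fst a && negb true || outside_T n ms (snd a))). lra.
  - rewrite Rplus_0_r. apply Hsrc. reflexivity.
Qed.


Theorem lemma4 (n : nat) (s : pt) (t : nat -> pt) (Ps N0 gamma alpha : R) (r0 : pt) :
  (1 <= n)%nat ->
  (forall k, (k < n)%nat -> t k <> s) ->
  (forall i j, (i < n)%nat -> (j < n)%nat -> i <> j -> t i <> t j) ->
  (forall i j, (i <= j)%nat -> (j < n)%nat -> Dpt s (t i) <= Dpt s (t j)) ->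
  0 < Ps -> 0 < N0 -> 0 < gamma -> 2 <= alpha ->
  (exists lam, 0 <= lam <= 1 /\
     r0 = (fst s + lam * (fst (t (n-1)%nat) - fst s),
           snd s + lam * (snd (t (n-1)%nat) - snd s))) ->
  Dpt s r0 = Dpt s (t (n-1)%nat) / (1 + Rpower gamma (1 / alpha)) ->
  (forall k, (k < n)%nat -> t k <> r0) ->
  (forall k, (k < n)%nat ->
     Dpt s (t k) <= Dpt s r0 \/ Dpt r0 (t k) <= Dpt r0 (t (n-1)%nat)) ->
  forall (r : pt), r <> s -> (forall k, (k < n)%nat -> r <> t k) ->
  forall (PS : bool -> list bool -> R) (PR : list bool -> R),
    feasible n Ps (gamma * Ps) PS PR ->
    exists (PS0 : bool -> list bool -> R) (PR0 : list bool -> R),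
      feasible n Ps (gamma * Ps) PS0 PR0 /\
      R_sT n s t r N0 alpha PS PR <= R_sT n s t r0 N0 alpha PS0 PR0.
Proof.
  intros Hn Hts _ _ HPs HN0 Hgam Ha [lam [Hlam Hr0]] Hsr0 Htr Hcov r Hrs Hrt PS PR Hf.
  set (g := Rpower gamma (1 / alpha)) in *.
  assert (Hg : 0 < g) by apply Rpower_pos.
  assert (Hgg : Rpower g alpha = gamma).
  { unfold g. rewrite Rpower_mult. replace (1 / alpha * alpha) with 1 by (field; lra).
    apply Rpower_1; auto. }
  assert (Htn : (n - 1 < n)%nat) by lia.
  set (tn := t (n - 1)%nat) in *.
  assert (HD : 0 < Dpt s tn) by (apply Dpt_pos; intro E; apply (Hts (n-1)%nat Htn); symmetry; exact E).
  pose proof (Dpt_seg s tn lam Hlam) as [E1 E2]. cbv zeta in E1, E2. rewrite <- Hr0 in E1, E2.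
  assert (Hsr : 0 < Dpt s r0) by (rewrite Hsr0; apply Rdiv_lt_0_compat; lra).
  assert (E3 : Dpt r0 tn = g * Dpt s r0).
  { rewrite E2. rewrite Hsr0 in E1. rewrite Hsr0.
    assert (lam = 1 / (1 + g)).
    { apply Rmult_eq_reg_r with (Dpt s tn); [|lra]. rewrite <- E1. field. lra. }
    subst lam. field. lra. }
  assert (Hrel : Rpower (Dpt r0 tn) alpha = gamma * Rpower (Dpt s r0) alpha).
  { rewrite E3, <- Hgg. rewrite Rpower_mult_distr; auto. }
  destruct (lower n s t r0 Ps N0 gamma alpha Hn Hts Htr Hsr HPs HN0 Hgam ltac:(lra) Hrel Hcov)
    as [PS0 [PR0 [Hf0 Hlow]]].
  exists PS0, PR0. split; auto.
  eapply Rle_trans; [|exact Hlow].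
  rewrite Hsr0. apply upper.
  - exact Hn.
  - apply Hts; exact Htn.
  - exact Hrs.
  - apply Hrt; exact Htn.
  - exact HPs.
  - exact HN0.
  - exact Hg.
  - lra.
  - rewrite Hgg; exact Hf.
Qed.
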